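(* Let $V^*$ be as below. (i) For $(t,x)$ with $0\le t<1$ and $x>C^*\sqrt{1-t}$, $\mathcal{L}V^*(t,x)=0$. (ii) For $(t,x)$ with $0\le t<1$ and $x<C^*\sqrt{1-t}$, $\mathcal{L}V^*(t,x)\le0$.
   Context: For a function $\xi(t,x)$ of class $C^{1}$ in $t$ and $C^{2}$ in $x$, define $$\mathcal{L}\xi=\frac{\partial\xi}{\partial t}-\frac{x}{1-t}\frac{\partial\xi}{\partial x}+\frac12\frac{\partial^2\xi}{\partial x^2}.$$ $\Phi$ is the standard normal distribution function. $B^*\approx0.84$ is the unique positive solution of $\sqrt{2\pi}(1-B^2)e^{B^2/2}\Phi(B)=B$. Define $U(t,x)=\sqrt{2\pi(1-t)}(1-(B^* )^2)e^{x^2/(2(1-t))}\Phi(x/\sqrt{1-t})$ for $x<B^*\sqrt{1-t}$, and $U(t,x)=x$ otherwise. Set $f=U-x$. For $C\le B^*$ let $v(C)=\frac{1}{\Phi(-C)}[(1-(B^* )^2)\Phi(C)-Ce^{-C^2/2}/\sqrt{2\pi}]$ and $u(C)=1-(B^* )^2-(1-C^2)\Phi(-C)-\frac{C}{\sqrt{2\pi}}e^{-C^2/2}$. $C^*$ is the unique negative zero of $u$. $V^*(t,x)=\sqrt{1-t}\sqrt{2\pi}\Phi(-x/\sqrt{1-t})e^{x^2/(2(1-t))}v(C^* )$ for $x>C^*\sqrt{1-t}$, and $V^*(t,x)=f(t,x)$ for $x\le C^*\sqrt{1-t}$. *)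

(* Defs.v *)
From Stdlib Require Import Reals.
From Coquelicot Require Import Coquelicot.
Open Scope R_scope.

(* Standard normal distribution function:
   Phi x = 1/2 + (1/sqrt(2 pi)) * int_0^x exp(-s^2/2) ds
   (equal to int_{-oo}^x of the standard normal density). *)
Definition Phi (x : R) : R :=
  / 2 + / sqrt (2 * PI) * RInt (fun s => exp (- s ^ 2 / 2)) 0 x.

Definition Beq (B : R) : Prop :=
  sqrt (2 * PI) * (1 - B ^ 2) * exp (B ^ 2 / 2) * Phi B = B.

Definition U (Bs t x : R) : R :=
  if Rlt_dec x (Bs * sqrt (1 - t)) then
    sqrt (2 * PI * (1 - t)) * (1 - Bs ^ 2) * exp (x ^ 2 / (2 * (1 - t)))
      * Phi (x / sqrt (1 - t))
  else x.

Definition f (Bs t x : R) : R := U Bs t x - x.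

Definition v (Bs C : R) : R :=
  / Phi (- C) * ((1 - Bs ^ 2) * Phi C - C * exp (- C ^ 2 / 2) / sqrt (2 * PI)).

Definition u (Bs C : R) : R :=
  1 - Bs ^ 2 - (1 - C ^ 2) * Phi (- C) - C / sqrt (2 * PI) * exp (- C ^ 2 / 2).

Definition Vstar (Bs Cs t x : R) : R :=
  if Rlt_dec (Cs * sqrt (1 - t)) x then
    sqrt (1 - t) * sqrt (2 * PI) * Phi (- x / sqrt (1 - t))
      * exp (x ^ 2 / (2 * (1 - t))) * v Bs Cs
  else f Bs t x.

Definition dt (xi : R -> R -> R) (t x : R) : R := Derive (fun s => xi s x) t.
Definition dx (xi : R -> R -> R) (t x : R) : R := Derive (fun y => xi t y) x.
Definition dxx (xi : R -> R -> R) (t x : R) : R :=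
  Derive (fun y => Derive (fun z => xi t z) y) x.

Definition L_defined (xi : R -> R -> R) (t x : R) : Prop :=
  ex_derive (fun s => xi s x) t /\
  ex_derive (fun y => xi t y) x /\
  ex_derive (fun y => Derive (fun z => xi t z) y) x.

Definition Lop (xi : R -> R -> R) (t x : R) : R :=
  dt xi t x - x / (1 - t) * dx xi t x + / 2 * dxx xi t x.

(* Main.v *)
Require Import Defs.
From Stdlib Require Import Reals.
From Coquelicot Require Import Coquelicot.
From Stdlib Require Import Lra Psatz.
Open Scope R_scope.

Lemma Phi_deriv y : is_derive Phi y (exp (- y ^ 2 / 2) / sqrt (2 * PI)).
Proof.
  unfold Phi.
  assert (Hc : forall z, continuous (fun s => exp (- s ^ 2 / 2)) z).
  { intros z. apply (ex_derive_continuous (fun s => exp (- s ^ 2 / 2))). auto_derive. auto. }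
  assert (H : is_derive (fun b => RInt (fun s => exp (- s ^ 2 / 2)) 0 b) y (exp (- y ^ 2 / 2))).
  { apply (is_derive_RInt (fun s => exp (- s ^ 2 / 2)) _ 0).
    apply filter_forall. intros b. apply (@RInt_correct R_CompleteNormedModule). apply (@ex_RInt_continuous R_CompleteNormedModule). intros; apply Hc.
    apply Hc. }
  evar (l : R).
  assert (H2 : is_derive (fun x => / 2 + / sqrt (2 * PI) * RInt (fun s => exp (- s ^ 2 / 2)) 0 x) y l).
  { apply (@is_derive_plus R_AbsRing R_NormedModule). apply is_derive_const. apply is_derive_scal. exact H. }
  subst l. rewrite plus_zero_l in H2. replace (exp (- y ^ 2 / 2) / sqrt (2 * PI)) with (/ sqrt (2 * PI) * exp (- y ^ 2 / 2)) by (unfold Rdiv; ring). exact H2.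
Qed.

Lemma DPhi z : Derive (fun y => Phi y) z = exp (- z ^ 2 / 2) / sqrt (2 * PI).
Proof. apply is_derive_unique. apply Phi_deriv. Qed.
Lemma exPhi z : ex_derive (fun y => Phi y) z.
Proof. eexists. apply Phi_deriv. Qed.

Lemma expc c x s r : r * r = s -> r <> 0 -> c ^ 2 = x ^ 2 ->
  exp (- (c * / r) ^ 2 / 2) = / exp (x * (x * 1) * / (2 * s)).
Proof.
  intros Hr Hr0 Hc. rewrite <- exp_Ropp. f_equal. rewrite <- Hr.
  replace ((c * / r) ^ 2) with (c ^ 2 / (r * r)) by (field; auto). rewrite Hc. field. auto.
Qed.

Lemma A_pos : 0 < sqrt (2 * PI).
Proof. apply sqrt_lt_R0. generalize PI_RGT_0; lra. Qed.

Definition W (K t x : R) := sqrt (1 - t) * sqrt (2 * PI) * Phi (- x / sqrt (1 - t)) * exp (x ^ 2 / (2 * (1 - t))) * K.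
Definition Wt (K t x : R) := sqrt (2 * PI) * K * (- Phi (- x / sqrt (1 - t)) * exp (x ^ 2 / (2 * (1 - t))) / (2 * sqrt (1 - t))
  + sqrt (1 - t) * Phi (- x / sqrt (1 - t)) * exp (x ^ 2 / (2 * (1 - t))) * x ^ 2 / (2 * (1 - t) ^ 2)) - K * x / (2 * (1 - t)).

Ltac fin_tac c x t Hrr :=
  rewrite ?DPhi;
  rewrite ?(sqrt_mult (2 * PI) (1 + - t)) by lra;
  rewrite ?(expc c x (1 + - t) (sqrt (1 + - t))) by (try lra; ring);
  unfold Rdiv; replace (x ^ 2) with (x * (x * 1)) by ring;
  let r := fresh "r" in let p := fresh "p" in let e := fresh "e" in let He := fresh "He" in
  set (r := sqrt (1 + - t)) in *; set (p := Phi (c * / r));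
  set (e := exp (x * (x * 1) * / (2 * (1 + - t))));
  assert (He : 0 < e) by apply exp_pos; clearbody r p e;
  let A := fresh "A" in let HAA := fresh "HAA" in
  set (A := sqrt (2 * PI)) in *;
  assert (HAA : A * A = 2 * PI) by (apply sqrt_sqrt; lra); clearbody A;
  rewrite <- ?HAA; rewrite <- ?Hrr; field; lra.

Ltac pre_tac t :=
  assert (Hs : 0 < 1 - t) by lra;
  assert (Hr : 0 < sqrt (1 - t)) by (apply sqrt_lt_R0; lra);
  assert (Hrr : sqrt (1 - t) * sqrt (1 - t) = 1 - t) by (apply sqrt_sqrt; lra);
  generalize A_pos; intro HA; generalize PI_RGT_0; intro HPI.

Lemma W_dt K t x : t < 1 -> is_derive (fun s => W K s x) t (Wt K t x).
Proof.
intros Ht. pre_tac t.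
unfold W, Wt. unfold Rminus in *. auto_derive.
{ repeat split; try lra; try apply exPhi. }
fin_tac (-x) x t Hrr.
Qed.

Definition Wx (K t x : R) := sqrt (2 * PI) * K * Phi (- x / sqrt (1 - t)) * exp (x ^ 2 / (2 * (1 - t))) * x / sqrt (1 - t) - K.
Definition Wxx (K t x : R) := - K * x / (1 - t) + sqrt (2 * PI) * K * Phi (- x / sqrt (1 - t)) * exp (x ^ 2 / (2 * (1 - t))) * (x ^ 2 / (1 - t) + 1) / sqrt (1 - t).

Lemma W_dx K t x : t < 1 -> is_derive (fun y => W K t y) x (Wx K t x).
Proof.
intros Ht. pre_tac t.
unfold W, Wx. unfold Rminus in *. auto_derive.
{ repeat split; try lra; try apply exPhi. }
fin_tac (-x) x t Hrr.
Qed.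

Lemma Wx_dx K t x : t < 1 -> is_derive (fun y => Wx K t y) x (Wxx K t x).
Proof.
intros Ht. pre_tac t.
unfold Wx, Wxx. unfold Rminus in *. auto_derive.
{ repeat split; try lra; try apply exPhi. }
fin_tac (-x) x t Hrr.
Qed.

Lemma W_L K t x : t < 1 -> Wt K t x - x / (1 - t) * Wx K t x + / 2 * Wxx K t x = 0.
Proof.
intros Ht. pre_tac t. unfold Wt, Wx, Wxx. unfold Rminus in *.
set (r := sqrt (1 + - t)) in *. set (p := Phi (- x / r)).
set (e := exp (x ^ 2 / (2 * (1 + - t)))). clearbody r p e.
rewrite <- Hrr. field. lra.
Qed.

Definition F (K t x : R) := sqrt (2 * PI * (1 - t)) * K * exp (x ^ 2 / (2 * (1 - t))) * Phi (x / sqrt (1 - t)) - x.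
Definition Ft (K t x : R) := sqrt (2 * PI) * K * exp (x ^ 2 / (2 * (1 - t))) * Phi (x / sqrt (1 - t)) * (- 1 / (2 * sqrt (1 - t)) + x ^ 2 / (2 * (1 - t) * sqrt (1 - t))) + K * x / (2 * (1 - t)).
Definition Fx (K t x : R) := sqrt (2 * PI) * K * exp (x ^ 2 / (2 * (1 - t))) * Phi (x / sqrt (1 - t)) * x / sqrt (1 - t) + K - 1.
Definition Fxx (K t x : R) := sqrt (2 * PI) * K * exp (x ^ 2 / (2 * (1 - t))) * Phi (x / sqrt (1 - t)) * (x ^ 2 / (1 - t) + 1) / sqrt (1 - t) + K * x / (1 - t).

Lemma F_dt K t x : t < 1 -> is_derive (fun s => F K s x) t (Ft K t x).
Proof.
intros Ht. pre_tac t.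
unfold F, Ft. unfold Rminus in *. auto_derive.
{ repeat split; try lra; try apply exPhi. apply Rmult_lt_0_compat; lra. }
fin_tac x x t Hrr.
Qed.

Lemma F_dx K t x : t < 1 -> is_derive (fun y => F K t y) x (Fx K t x).
Proof.
intros Ht. pre_tac t.
unfold F, Fx. unfold Rminus in *. auto_derive.
{ repeat split; try lra; try apply exPhi. }
fin_tac x x t Hrr.
Qed.

Lemma Fx_dx K t x : t < 1 -> is_derive (fun y => Fx K t y) x (Fxx K t x).
Proof.
intros Ht. pre_tac t.
unfold Fx, Fxx. unfold Rminus in *. auto_derive.
{ repeat split; try lra; try apply exPhi. }
fin_tac x x t Hrr.
Qed.

Lemma F_L K t x : t < 1 -> Ft K t x - x / (1 - t) * Fx K t x + / 2 * Fxx K t x = x / (1 - t).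
Proof.
intros Ht. pre_tac t. unfold Ft, Fx, Fxx. unfold Rminus in *.
set (r := sqrt (1 + - t)) in *. set (p := Phi (x / r)).
set (e := exp (x ^ 2 / (2 * (1 + - t)))). clearbody r p e.
rewrite <- Hrr. field. lra.
Qed.

Lemma assemble (V G Gt Gx Gxx : R -> R -> R) t x (P : R -> R -> Prop) :
  (forall s y, P s y -> V s y = G s y) ->
  locally t (fun s => P s x) -> locally x (fun y => P t y) ->
  is_derive (fun s => G s x) t (Gt t x) ->
  (forall y, is_derive (fun y => G t y) y (Gx t y)) ->
  is_derive (fun y => Gx t y) x (Gxx t x) ->
  L_defined V t x /\ dt V t x = Gt t x /\ dx V t x = Gx t x /\ dxx V t x = Gxx t x.
Proof.
  intros HVG Ht Hx Hdt Hdx Hdxx.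
  assert (Et : locally t (fun s => G s x = V s x)).
  { eapply filter_imp. 2: exact Ht. intros s Hs; simpl. symmetry; apply HVG; auto. }
  assert (Ex : locally x (fun y => G t y = V t y)).
  { eapply filter_imp. 2: exact Hx. intros s Hs; simpl. symmetry; apply HVG; auto. }
  assert (Exx : locally x (fun y => Gx t y = Derive (fun z => V t z) y)).
  { eapply filter_imp. 2: exact (locally_locally _ _ Hx). intros y Hy; simpl.
    symmetry. rewrite (Derive_ext_loc _ (fun z => G t z)).
    apply is_derive_unique. apply Hdx.
    eapply filter_imp. 2: exact Hy. intros s Hs; simpl. apply HVG; auto. }
  assert (D1 : is_derive (fun s => V s x) t (Gt t x)) by (apply (is_derive_ext_loc (fun s => G s x)); assumption).
  assert (D2 : is_derive (fun y => V t y) x (Gx t x)) by (apply (is_derive_ext_loc (fun y => G t y)); [assumption | apply Hdx]).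
  assert (D3 : is_derive (fun y => Derive (fun z => V t z) y) x (Gxx t x)) by (apply (is_derive_ext_loc (fun y => Gx t y)); assumption).
  unfold L_defined, dt, dx, dxx.
  repeat split; try (eexists; eassumption); apply is_derive_unique; assumption.
Qed.

Lemma loc_sqrt_lt C t x : t < 1 -> C * sqrt (1 - t) < x -> locally t (fun s => C * sqrt (1 - s) < x).
Proof.
  intros Ht H.
  assert (Hc : continuous (fun s => C * sqrt (1 - s)) t).
  { apply (ex_derive_continuous (fun s => C * sqrt (1 - s))). auto_derive. repeat split; lra. }
  apply (Hc (fun u => u < x)). apply (open_lt x). exact H.
Qed.
Lemma loc_sqrt_gt C t x : t < 1 -> x < C * sqrt (1 - t) -> locally t (fun s => x < C * sqrt (1 - s)).
Proof.
  intros Ht H.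
  assert (Hc : continuous (fun s => C * sqrt (1 - s)) t).
  { apply (ex_derive_continuous (fun s => C * sqrt (1 - s))). auto_derive. repeat split; lra. }
  apply (Hc (fun u => x < u)). apply (open_gt x). exact H.
Qed.

Theorem lemma3p4 (Bs Cs : R)
  (HBpos : 0 < Bs) (HBeq : Beq Bs)
  (HBuniq : forall B, 0 < B -> Beq B -> B = Bs)
  (HCneg : Cs < 0) (HCeq : u Bs Cs = 0)
  (HCuniq : forall C, C < 0 -> u Bs C = 0 -> C = Cs) :
  (forall t x, 0 <= t < 1 -> Cs * sqrt (1 - t) < x ->
     L_defined (Vstar Bs Cs) t x /\ Lop (Vstar Bs Cs) t x = 0) /\
  (forall t x, 0 <= t < 1 -> x < Cs * sqrt (1 - t) ->
     L_defined (Vstar Bs Cs) t x /\ Lop (Vstar Bs Cs) t x <= 0).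
Proof.
  split.
  - intros t x Ht Hx.
    destruct (assemble (Vstar Bs Cs) (W (v Bs Cs)) (Wt (v Bs Cs)) (Wx (v Bs Cs)) (Wxx (v Bs Cs)) t x
      (fun s y => Cs * sqrt (1 - s) < y)) as [HL [E1 [E2 E3]]].
    + intros s y Hsy. unfold Vstar, W. destruct Rlt_dec; [reflexivity | contradiction].
    + apply loc_sqrt_lt; lra.
    + apply (open_gt _ _ Hx).
    + apply W_dt; lra.
    + intros y; apply W_dx; lra.
    + apply Wx_dx; lra.
    + split; auto. unfold Lop. rewrite E1, E2, E3. apply W_L; lra.
  - intros t x Ht Hx.
    destruct (assemble (Vstar Bs Cs) (F (1 - Bs ^ 2)) (Ft (1 - Bs ^ 2)) (Fx (1 - Bs ^ 2)) (Fxx (1 - Bs ^ 2)) t x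
      (fun s y => y < Cs * sqrt (1 - s))) as [HL [E1 [E2 E3]]].
    + intros s y Hsy. unfold Vstar, Defs.f, Defs.U, F. destruct Rlt_dec; [lra |].
      destruct (Rlt_dec y (Bs * sqrt (1 - s))); [reflexivity |].
      exfalso. pose proof (sqrt_pos (1 - s)). nra.
    + apply loc_sqrt_gt; lra.
    + apply (open_lt _ _ Hx).
    + apply F_dt; lra.
    + intros y; apply F_dx; lra.
    + apply Fx_dx; lra.
    + split; auto. unfold Lop. rewrite E1, E2, E3. rewrite F_L by lra.
      pose proof (sqrt_pos (1 - t)).
      assert (Hx0 : x < 0) by nra.
      assert (Hi : 0 < / (1 - t)) by (apply Rinv_0_lt_compat; lra).
      unfold Rdiv. nra.
Qed.
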